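(* Let $M$ be an $m\times n$ matrix over a field with all entries nonzero, where $m<n$. If every maximal ($m\times m$) minor $N$ of $M$ satisfies $\operatorname{crk}N<m$, then $\operatorname{crk}M<m$.
   Context: For a matrix $M$ with nonzero entries, the combinatorial rank $\operatorname{crk}M$ is the minimum of the number of classes of mutually proportional rows of $M$ and the number of classes of mutually proportional columns of $M$. A maximal minor here means the square submatrix formed by some $m$ columns. *)

(* Defs.v *)
From HB Require Import structures.
From mathcomp Require Import all_boot all_order all_algebra.
Set Implicit Arguments. Unset Strict Implicit. Unset Printing Implicit Defensive.
Import GRing.Theory.
Local Open Scope ring_scope.

Definition rows_prop (F : fieldType) (m n : nat) (A : 'M[F]_(m, n))
  (i j : 'I_m) : bool := (row j A <= row i A)%MS.

Definition row_classes (F : fieldType) (m n : nat) (A : 'M[F]_(m, n))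
  : {set {set 'I_m}} := [set [set j | rows_prop A i j] | i : 'I_m].

Definition col_classes (F : fieldType) (m n : nat) (A : 'M[F]_(m, n))
  : {set {set 'I_n}} := row_classes A^T.

Definition crk (F : fieldType) (m n : nat) (A : 'M[F]_(m, n)) : nat :=
  minn #|row_classes A| #|col_classes A|.

(* Main.v *)
Require Import Defs.
From mathcomp Require Import all_boot all_order all_algebra.
From mathcomp Require Import ring.
Set Implicit Arguments. Unset Strict Implicit. Unset Printing Implicit Defensive.
Import GRing.Theory.
Local Open Scope ring_scope.

Lemma ct (F : fieldType) (x1 y1 x2 y2 x3 y3 : F) : x2 != 0 -> y2 != 0 ->
  x1 * y2 = x2 * y1 -> x2 * y3 = x3 * y2 -> x1 * y3 = x3 * y1.
Proof.
move=> nx ny e1 e2; apply: (mulIf (mulf_neq0 nx ny)).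
have -> : x1 * y3 * (x2 * y2) = (x1 * y2) * (x2 * y3) by ring.
rewrite e1 e2; ring.
Qed.

Definition crossS (F : fieldType) (m n : nat) (A : 'M[F]_(m, n)) (S : {set 'I_n})
  (i j : 'I_m) : bool :=
  [forall k in S, forall l in S, A i k * A j l == A i l * A j k].

Definition cross (F : fieldType) (m n : nat) (A : 'M[F]_(m, n)) i j :=
  crossS A setT i j.

Lemma crossSP (F : fieldType) (m n : nat) (A : 'M[F]_(m, n)) (S : {set 'I_n}) i j :
  reflect (forall k l, k \in S -> l \in S -> A i k * A j l = A i l * A j k)
          (crossS A S i j).
Proof.
apply: (iffP forallP) => [H k l kS lS | H k].
  by move/implyP: (H k) => /(_ kS) /forallP /(_ l) /implyP /(_ lS) /eqP.
by apply/implyP => kS; apply/forallP => l; apply/implyP => lS; apply/eqP; apply: H.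
Qed.

Lemma crossS_refl (F : fieldType) (m n : nat) (A : 'M[F]_(m, n)) (S : {set 'I_n}) i :
  crossS A S i i.
Proof. by apply/crossSP => k l _ _; rewrite mulrC. Qed.

Lemma crossS_sym (F : fieldType) (m n : nat) (A : 'M[F]_(m, n)) (S : {set 'I_n}) i j :
  crossS A S i j -> crossS A S j i.
Proof.
move/crossSP => H; apply/crossSP => k l kS lS.
by rewrite mulrC [RHS]mulrC; apply/esym/H.
Qed.

Lemma crossS_trans (F : fieldType) (m n : nat) (A : 'M[F]_(m, n)) (S : {set 'I_n}) i j h :
  (forall i j, A i j != 0) ->
  crossS A S i j -> crossS A S j h -> crossS A S i h.
Proof.
move=> nz /crossSP H1 /crossSP H2; apply/crossSP => k l kS lS.
rewrite [RHS]mulrC; apply: (@ct F (A i k) (A i l) (A j k) (A j l) (A h k) (A h l)) => //.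
  by rewrite H1 // mulrC.
by rewrite H2 // mulrC.
Qed.

Lemma crossS_sub (F : fieldType) (m n : nat) (A : 'M[F]_(m, n)) (S T : {set 'I_n}) i j :
  S \subset T -> crossS A T i j -> crossS A S i j.
Proof.
move=> sST /crossSP H; apply/crossSP => k l kS lS.
by apply: H; apply: (subsetP sST).
Qed.

Lemma crossS_via (F : fieldType) (m n : nat) (A : 'M[F]_(m, n)) (S : {set 'I_n}) i j s :
  (forall i j, A i j != 0) -> s \in S ->
  (forall k, k \in S -> A i k * A j s = A i s * A j k) -> crossS A S i j.
Proof.
move=> nz sS H; apply/crossSP => k l kS lS.
apply: (@ct F (A i k) (A j k) (A i s) (A j s) (A i l) (A j l)) => //.
  exact: H.
by rewrite (H l lS) mulrC.
Qed.

Lemma rows_propE (F : fieldType) (m n : nat) (A : 'M[F]_(m, n)) i j :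
  (forall i j, A i j != 0) -> rows_prop A i j = cross A i j.
Proof.
move=> nz; apply/idP/idP.
  move/submxP => [D eD]; apply/crossSP => k l _ _.
  have e : forall k, A j k = D 0 0 * A i k.
    move=> k'; have := congr1 (fun M : 'M_(1, n) => M 0 k') eD.
    rewrite !mxE big_ord1 !mxE => ->; done.
  by rewrite !e; ring.
move/crossSP => H; case: n A nz H => [|n] A nz H.
  by apply/submxP; exists 0; apply/matrixP => a [].
apply/submxP; exists ((A j 0 / A i 0)%:M).
rewrite mul_scalar_mx; apply/rowP => k; rewrite !mxE.
apply: (mulIf (nz i 0)).
rewrite mulrAC divfK //.
rewrite mulrC H ?inE //; exact: mulrC.
Qed.

Definition rcl (F : fieldType) (m n : nat) (A : 'M[F]_(m, n)) i :=
  [set j | rows_prop A i j].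

Lemma rclE (F : fieldType) (m n : nat) (A : 'M[F]_(m, n)) :
  row_classes A = [set rcl A i | i in 'I_m].
Proof. by []. Qed.

Lemma rcl_eq (F : fieldType) (m n : nat) (A : 'M[F]_(m, n)) i j :
  (forall i j, A i j != 0) -> cross A i j -> rcl A i = rcl A j.
Proof.
move=> nz c; apply/setP => x; rewrite !inE !rows_propE //.
apply/idP/idP => h.
  exact: crossS_trans (crossS_sym c) h.
exact: crossS_trans c h.
Qed.

Lemma card_rc_full (F : fieldType) (m n : nat) (A : 'M[F]_(m, n)) :
  (forall i j, rows_prop A i j -> i = j) -> #|row_classes A| = m.
Proof.
move=> H; rewrite rclE; apply/eqP; rewrite -[X in _ == X]card_ord.
apply/imset_injP => i j _ _ e; apply: H.
have : j \in rcl A j by rewrite inE /rows_prop submx_refl.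
by rewrite -e inE.
Qed.

Lemma rc_inj (F : fieldType) (m n : nat) (A : 'M[F]_(m, n)) i j :
  (forall i j, A i j != 0) -> (m <= #|row_classes A|)%N -> cross A i j -> i = j.
Proof.
move=> nz hm c.
have : #|row_classes A| == #|'I_m|.
  rewrite eqn_leq card_ord hm andbT.
  by rewrite rclE -[X in (_ <= X)%N]card_ord; apply: leq_imset_card.
rewrite rclE => /imset_injP; apply => //; exact: rcl_eq.
Qed.

Lemma pad (F : fieldType) (p q : nat) (B : 'M[F]_(p, q)) (k : nat) :
  (forall i j, B i j != 0) -> (k <= #|row_classes B|)%N ->
  forall d (S : {set 'I_p}), (#|S| + d)%N = k ->
  {in S &, forall i j, cross B i j -> i = j} ->
  exists T : {set 'I_p}, [/\ S \subset T, #|T| = k &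
     {in T &, forall i j, cross B i j -> i = j}].
Proof.
move=> nz hk; elim=> [|d IH] S hS hinj.
  by exists S; rewrite subxx addn0 in hS *.
have ltS : (#|S| < #|row_classes B|)%N by apply: leq_trans hk; rewrite -hS addnS ltnS leq_addr.
have : ~~ (row_classes B \subset [set rcl B s | s in S]).
  apply/negP => /subset_leq_card h.
  by have := leq_trans h (leq_imset_card _ _); rewrite leqNgt ltS.
case/subsetPn => C /imsetP [j _ ->] hC.
have jS : j \notin S by apply: contra hC => js; apply/imsetP; exists j.
have hnew : forall s, s \in S -> ~~ cross B s j.
  move=> s sS; apply/negP => c; move: hC.
  rewrite -[[set _ | rows_prop B j _]]/(rcl B j) -(rcl_eq nz c).
  by rewrite imset_f.
have h1 : (#|j |: S| + d)%N = k by rewrite cardsU1 jS add1n addSnnS.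
have h2 : {in j |: S &, forall i j, cross B i j -> i = j}.
  move=> a b; rewrite !inE => /orP [/eqP -> | aS] /orP [/eqP -> | bS] //.
  - by move=> c; move: (hnew b bS); rewrite /cross (crossS_sym c).
  - by move=> c; move: (hnew a aS); rewrite c.
  - exact: hinj.
have [T [sT cT iT]] := IH (j |: S) h1 h2.
by exists T; split=> //; apply: subset_trans sT; apply: subsetUr.
Qed.

Definition reps (F : fieldType) (m n : nat) (M : 'M[F]_(m, n)) (S : {set 'I_n}) :=
  [set i : 'I_m | [forall i' : 'I_m, (i' < i)%N ==> ~~ crossS M S i' i]].

Lemma reps_grow (F : fieldType) (m n : nat) (M : 'M[F]_(m, n)) (S : {set 'I_n}) j a b :
  (forall i j, M i j != 0) ->
  crossS M S a b -> ~~ crossS M (j |: S) a b -> reps M S \proper reps M (j |: S).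
Proof.
move=> nz Pab nP'ab.
have sub : forall x y, crossS M (j |: S) x y -> crossS M S x y.
  by move=> x y; apply: crossS_sub; apply: subsetUr.
apply/properP; split.
  apply/subsetP => i; rewrite !inE => /forallP H; apply/forallP => i'.
  apply/implyP => lt; move/implyP: (H i') => /(_ lt); apply: contra; exact: sub.
case: (@arg_minnP _ a (fun z => crossS M S a z) val (crossS_refl _ _ _)) => r Par rmin.
have [x [Prx nP'rx]] : exists x, crossS M S r x /\ ~~ crossS M (j |: S) r x.
  case: (boolP (crossS M (j |: S) r a)) => h1; last first.
    by exists a; split=> //; apply: crossS_sym.
  case: (boolP (crossS M (j |: S) r b)) => h2; last first.
    by exists b; split=> //; apply: crossS_trans (crossS_sym Par) Pab.
  by move: nP'ab; rewrite (crossS_trans nz (crossS_sym h1) h2).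
case: (@arg_minnP _ x (fun z => crossS M (j |: S) x z) val (crossS_refl _ _ _)) => y P'xy ymin.
exists y.
  rewrite inE; apply/forallP => z; apply/implyP => lt; apply/negP => P'zy.
  have := ymin z (crossS_trans nz P'xy (crossS_sym P'zy)).
  by rewrite leqNgt lt.
rewrite inE negb_forall; apply/existsP; exists r; rewrite negb_imply negbK.
have Pry : crossS M S r y := crossS_trans nz Prx (sub _ _ P'xy).
rewrite Pry andbT ltn_neqAle rmin ?andbT; last exact: crossS_trans nz Par Pry.
apply/eqP => /val_inj ery; move: nP'rx; rewrite ery.
by rewrite (crossS_sym P'xy).
Qed.

Lemma newcol (F : fieldType) (m n : nat) (M : 'M[F]_(m, n)) (S : {set 'I_n}) j s a b :
  (forall i j, M i j != 0) -> s \in S ->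
  crossS M S a b -> cross M^T s j -> crossS M (j |: S) a b.
Proof.
move=> nz sS /crossSP Pab /crossSP c.
apply: (crossS_via (s := s)) => //; first by rewrite !inE sS orbT.
move=> k; rewrite !inE => /orP [/eqP -> | kS]; last exact: Pab.
have := c a b; rewrite !inE !mxE => /(_ isT isT) e.
by rewrite mulrC e mulrC.
Qed.

Lemma brk (F : fieldType) (m n : nat) (M : 'M[F]_(m, n)) (S : {set 'I_n}) s a b :
  (forall i j, M i j != 0) -> s \in S -> ~~ cross M a b ->
  exists j, ~~ crossS M (j |: S) a b.
Proof.
move=> nz sS nc.
case: (boolP [exists j, ~~ crossS M (j |: S) a b]) => [/existsP // | /existsPn H].
move: nc; rewrite /cross (crossS_via (s := s)) ?inE //.
move=> k _; have := H k; rewrite negbK => /crossSP; apply; by rewrite !inE ?eqxx ?sS ?orbT.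
Qed.

Lemma greedy (F : fieldType) (m n : nat) (M : 'M[F]_(m, n)) :
  (forall i j, M i j != 0) -> (0 < m)%N -> (0 < n)%N ->
  (forall i j, cross M i j -> i = j) ->
  forall k, (k <= m)%N -> exists S : {set 'I_n},
    [/\ (exists s, s \in S), (#|S| <= #|reps M S|)%N,
        {in S &, forall k l, cross M^T k l -> k = l} & (k <= #|reps M S|)%N].
Proof.
move=> nz m0 n0 rinj; elim=> [_|k IH lekm].
  exists [set Ordinal n0]; split.
  - by exists (Ordinal n0); rewrite inE.
  - rewrite cards1; apply/card_gt0P; exists (Ordinal m0).
    by rewrite inE; apply/forallP => z.
  - by move=> a b; rewrite !inE => /eqP -> /eqP ->.
  - by [].
have [S [[s sS] hc hinj hk]] := IH (ltnW lekm).
case: (leqP k.+1 #|reps M S|) => hk'.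
  by exists S; split=> //; exists s.
have ek : #|reps M S| = k by apply/eqP; rewrite eqn_leq hk andbT -ltnS.
have [i ni] : exists i, i \notin reps M S.
  case: (boolP [exists i, i \notin reps M S]) => [/existsP // | /existsPn H].
  have : [set: 'I_m] \subset reps M S by apply/subsetP => x _; have := H x; rewrite negbK.
  move/subset_leq_card; rewrite cardsT card_ord ek => h.
  by move: (leq_ltn_trans h lekm); rewrite ltnn.
move: ni; rewrite inE negb_forall => /existsP [i' ]; rewrite negb_imply negbK.
case/andP => lt Pi'i.
have nc : ~~ cross M i' i.
  apply/negP => /rinj e; move: lt; rewrite e ltnn.
  by [].
have [j nj] := brk nz sS nc.
have pr := reps_grow nz Pi'i nj.
have hcard := proper_card pr.
exists (j |: S); split.
- by exists j; rewrite !inE eqxx.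
- rewrite cardsU1; apply: leq_trans hcard.
  case: (j \notin S); rewrite ?add1n ?add0n //; exact: leqW.
- have hnew : forall s, s \in S -> ~~ cross M^T s j.
    move=> s' s'S; apply/negP => c.
    by move: nj; rewrite (newcol nz s'S Pi'i c).
  move=> a b; rewrite !inE => /orP [/eqP -> | aS] /orP [/eqP -> | bS] //.
  + by move=> c; move: (hnew b bS); rewrite /cross (crossS_sym c).
  + by move=> c; move: (hnew a aS); rewrite c.
  + exact: hinj.
- by rewrite -ek.
Qed.

Theorem lemma5p19 (F : fieldType) (m n : nat) (M : 'M[F]_(m, n)) :
  (m < n)%N ->
  (forall i j, M i j != 0) ->
  (forall f : 'I_m -> 'I_n, injective f -> (crk (colsub f M) < m)%N) ->
  (crk M < m)%N.
Proof.
move=> mn nz H.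
have m0 : (0 < m)%N.
  have winj : injective (widen_ord (ltnW mn)).
    by move=> x y e; apply: val_inj; exact: (congr1 val e).
  by have := H _ winj; apply: leq_ltn_trans.
have n0 : (0 < n)%N by apply: ltn_trans mn.
rewrite ltnNge; apply/negP; rewrite /crk leq_min => /andP [hr hc].
have rinj : forall i j, cross M i j -> i = j by move=> i j; apply: rc_inj.
have [S [_ hcS hinj hk]] := greedy nz m0 n0 rinj (leqnn m).
have repsT : reps M S = setT.
  apply/eqP; rewrite eqEcard subsetT cardsT card_ord hk //.
have rowsS : forall i j, crossS M S i j -> i = j.
  have rp : forall i j : 'I_m, (i < j)%N -> ~~ crossS M S i j.
    move=> i j lt; have : j \in reps M S by rewrite repsT inE.
    by rewrite inE => /forallP /(_ i) /implyP /(_ lt).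
  move=> i j c; case: (ltngtP i j) => [lt|lt|/val_inj //].
    by move: (rp _ _ lt); rewrite c.
  by move: (rp _ _ lt); rewrite (crossS_sym c).
have nzT : forall i j, M^T i j != 0 by move=> i j; rewrite mxE.
have Sm : (#|S| <= m)%N.
  by apply: leq_trans hcS _; rewrite -[X in (_ <= X)%N]card_ord max_card.
have [T [sT cT iT]] := pad nzT hc (subnKC Sm) hinj.
pose f : 'I_m -> 'I_n := fun k => enum_val (cast_ord (esym cT) k).
have finj : injective f by move=> x y /enum_val_inj /cast_ord_inj.
have fT : forall k, f k \in T by move=> k; apply: enum_valP.
have fsurj : forall k, k \in T -> exists x, f x = k.
  move=> k kT; exists (cast_ord cT (enum_rank_in kT k)).
  by rewrite /f cast_ordK enum_rankK_in.
have := H f finj.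
have nzN : forall i j, colsub f M i j != 0 by move=> i j; rewrite mxE.
have nzNT : forall i j, (colsub f M)^T i j != 0 by move=> i j; rewrite !mxE.
rewrite /crk (card_rc_full (A := colsub f M)); last first.
  move=> i j; rewrite rows_propE // => /crossSP c; apply: rowsS.
  apply: (crossS_sub sT); apply/crossSP => k l kT lT.
  have [k' <-] := fsurj k kT; have [l' <-] := fsurj l lT.
  by have := c k' l'; rewrite !inE !mxE; apply.
rewrite /col_classes (card_rc_full (A := (colsub f M)^T)); last first.
  move=> k l; rewrite rows_propE // => /crossSP c; apply: finj; apply: iT => //.
  apply/crossSP => i j _ _; have := c i j; rewrite !inE !mxE; exact.
by rewrite minnn ltnn.
Qed.
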